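(* Let $X$ be a real reflexive Banach space and let $\varepsilon\in[0,2)$. Then $X$ is $\varepsilon$-smooth if and only if $\mathcal{S}(X^* )\le\varepsilon$.
   Context: For a normed space $Z$ and $z\in Z\setminus\{\theta\}$, $J(z)=\{\phi\in S_{Z^*}:\phi(z)=\|z\|\}$, where $S_{Z^*}$ is the unit sphere of the dual. A point $z$ is $\varepsilon$-smooth if $\operatorname{diam}J(z)\le\varepsilon$ ($\operatorname{diam}A=\sup_{a,b\in A}\|a-b\|$); the space $Z$ is $\varepsilon$-smooth if every $z\in S_Z$ is $\varepsilon$-smooth. For a normed space $W$, $\mathcal{S}(W)=\sup\{\operatorname{diam}(H\cap S_W): H \text{ a supporting hyperplane of } B_W\}$, where a supporting hyperplane of $B_W$ is a set $\{w\in W:\phi(w)=1\}$ with $\phi\in S_{W^*}$; equivalently $\mathcal{S}(W)=\sup\{\operatorname{diam}\{w\in S_W:\phi(w)=1\}:\phi\in S_{W^*}\}$. Here it is applied with $W=X^*$. *)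

(* Defs.v *)
From HB Require Import structures.
From mathcomp Require Import all_boot all_order all_algebra.
From mathcomp Require Import all_classical all_reals all_analysis.
Set Implicit Arguments. Unset Strict Implicit. Unset Printing Implicit Defensive.
Import Order.TTheory GRing.Theory Num.Theory.
Import numFieldNormedType.Exports.
Local Open Scope classical_set_scope.
Local Open Scope ring_scope.

(* Elements of the dual X* are represented as functions X -> R that are
   linear and bounded (= continuous linear functionals). *)
Section Duality.
Variables (R : realType) (X : normedModType R).

Definition is_dual (f : X -> R) : Prop :=
  (forall (a : R) (x y : X), f (a *: x + y) = a * f x + f y) /\
  (exists C : R, forall x : X, `|f x| <= C * `|x|).

Definition dnorm (f : X -> R) : R :=
  sup [set `|f x| | x in [set x : X | `|x| <= 1]].

Definition dual_sphere (f : X -> R) : Prop := is_dual f /\ dnorm f = 1.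

Definition ddiam (A : set (X -> R)) : \bar R :=
  ereal_sup [set (dnorm (fun x => f x - g x))%:E
            | f in A & g in A].

Definition Jset (z : X) : set (X -> R) :=
  [set f | dual_sphere f /\ f z = `|z|].

Definition eps_smooth_pt (eps : R) (z : X) : Prop := (ddiam (Jset z) <= eps%:E)%E.

Definition eps_smooth (eps : R) : Prop :=
  forall z : X, `|z| = 1 -> eps_smooth_pt eps z.

(* Elements of the bidual X** : maps on X* (functions X -> R), linear and
   bounded w.r.t. the dual norm on the dual elements. *)
Definition is_bidual (Phi : (X -> R) -> R) : Prop :=
  (forall (a : R) (f g : X -> R), is_dual f -> is_dual g ->
      Phi (fun x => a * f x + g x) = a * Phi f + Phi g) /\
  (exists C : R, forall f, is_dual f -> `|Phi f| <= C * dnorm f).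

Definition bdnorm (Phi : (X -> R) -> R) : R :=
  sup [set `|Phi f| | f in [set f | is_dual f /\ dnorm f <= 1]].

Definition face (Phi : (X -> R) -> R) : set (X -> R) :=
  [set f | dual_sphere f /\ Phi f = 1].

Definition bidual_sphere (Phi : (X -> R) -> R) : Prop :=
  is_bidual Phi /\ bdnorm Phi = 1.

Definition S_dual : \bar R :=
  ereal_sup [set ddiam (face Phi) | Phi in bidual_sphere].

Definition reflexive_space : Prop :=
  forall Phi, is_bidual Phi -> exists x : X, forall f, is_dual f -> Phi f = f x.

End Duality.

(* Main.v *)
Require Import Defs.
From HB Require Import structures.
From mathcomp Require Import all_boot all_order all_algebra.
From mathcomp Require Import all_classical all_reals all_analysis.
From mathcomp Require Import lra.
Set Implicit Arguments. Unset Strict Implicit. Unset Printing Implicit Defensive.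
Import Order.TTheory GRing.Theory Num.Theory.
Import numFieldNormedType.Exports.
Local Open Scope classical_set_scope.
Local Open Scope ring_scope.

Section HBsec.
Variables (R : realType) (X : normedModType R).

Definition lin_dom (G : set (X * R)) : Prop :=
  (forall (a : R) p q, G p -> G q -> G (a *: p.1 + q.1, a * p.2 + q.2)) /\
  (forall p, G p -> p.2 <= `|p.1|).

Lemma lin_dom_eq G a u s v t y r : lin_dom G -> G (u, s) -> G (v, t) ->
  a *: u + v = y -> a * s + t = r -> G (y, r).
Proof. by move=> [HG _] Hp Hq <- <-; exact: (HG a (u,s) (v,t)). Qed.

Lemma lin_dom0 G p : lin_dom G -> G p -> G (0, 0).
Proof.
move=> HG; case: p => u s Gp.
by apply: (lin_dom_eq (a:=-1) HG Gp Gp); rewrite ?scaleN1r ?mulN1r addNr.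
Qed.

Lemma lin_dom_fun G u s t : lin_dom G -> G (u, s) -> G (u, t) -> s = t.
Proof.
move=> HG Gs Gt.
have H1 : G (0, s - t).
  apply: (lin_dom_eq (a:=-1) HG Gt Gs); first by rewrite scaleN1r addNr.
  by rewrite mulN1r addrC.
have H2 : G (0, t - s).
  apply: (lin_dom_eq (a:=-1) HG Gs Gt); first by rewrite scaleN1r addNr.
  by rewrite mulN1r addrC.
have /= := HG.2 _ H1; have /= := HG.2 _ H2; rewrite normr0 => ? ?.
lra.
Qed.

Lemma hahn_banach_norming (x : X) : x != 0 ->
  exists f : X -> R, is_dual f /\ dnorm f = 1 /\ f x = `|x|.
Proof.
move=> x0.
pose G0 : set (X * R) := [set p | exists c : R, p = (c *: x, c * `|x|)].
have G0x : G0 (x, `|x|) by exists 1; rewrite scale1r mul1r.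
have linG0 : lin_dom G0.
  split.
    move=> a _ _ [c ->] [d ->]; exists (a * c + d) => /=.
    by rewrite scalerDl scalerA mulrDl mulrA.
  move=> _ [c ->] /=; rewrite normrZ ler_wpM2r //; exact: ler_norm.
pose P (G : set (X * R)) := lin_dom (G `|` G0).
have [A [PA Amax]] : exists A, P A /\ forall B, A `<` B -> ~ P B.
  apply: Zorn_bigcup => F FP Ftot.
  set U := \bigcup_(Y in F) Y.
  have sub : forall Y, F Y -> Y `|` G0 `<=` U `|` G0.
    by move=> Y FY r [Yr|Gr]; [left; exists Y|right].
  have common : forall p q, (U `|` G0) p -> (U `|` G0) q ->
     exists H, [/\ lin_dom H, H p, H q & H `<=` U `|` G0].
    move=> p q [[Y FY Yp]|G0p] [[Z FZ Zq]|G0q].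
    - have [YZ|ZY] := Ftot Y Z FY FZ.
        by exists (Z `|` G0); split; [exact: FP|left; exact: YZ|left|exact: sub].
      by exists (Y `|` G0); split; [exact: FP|left|left; exact: ZY|exact: sub].
    - by exists (Y `|` G0); split; [exact: FP|left|right|exact: sub].
    - by exists (Z `|` G0); split; [exact: FP|right|left|exact: sub].
    - by exists G0; split => // r Gr; right.
  split.
    move=> a p q Hp Hq; have [H [HH Hp' Hq' HU]] := common p q Hp Hq.
    by apply: HU; apply: HH.1.
  move=> p Hp; have [H [HH Hp' _ _]] := common p p Hp Hp; exact: HH.2.
have G0A : G0 `<=` A.
  apply: contrapT => nG0A; apply: (Amax (A `|` G0)); last by rewrite /P -setUA setUid.
  split; first by move=> r Ar; left.
  by move=> H; apply: nG0A => r G0r; apply: H; right.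
have AU : A `|` G0 = A.
  apply/seteqP; split; last by move=> q Aq; left.
  by move=> q [//|/G0A].
have linA : lin_dom A by rewrite -AU.
have A00 : A (0,0) := lin_dom0 linA (G0A _ G0x).
have Atot : forall y, exists s, A (y, s).
  move=> y; apply: contrapT => ny.
  pose E := [set p.2 - `|p.1 - y| | p in A].
  pose r := sup E.
  have key : forall v t w t', A (v,t) -> A (w,t') ->
      t - `|v - y| <= `|w + y| - t'.
    move=> v t w t' Avt Awt'.
    have /= le1 := linA.2 _ (lin_dom_eq (a:=1) linA Avt Awt' erefl erefl).
    have e : (v - y) + (w + y) = v + w by rewrite addrACA addNr addr0.
    have h2 : `|1 *: v + w| <= `|v - y| + `|w + y|.
      by rewrite scale1r -e; exact: ler_normD.
    lra.
  have En0 : E !=set0 by exists (0 - `|0 - y|), (0,0).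
  have Eub : has_ubound E.
    exists `|y|; move=> _ [[v t] Avt <-] /=.
    by have := key _ _ _ _ Avt A00; rewrite add0r subr0.
  pose B := [set q | exists p c, A p /\ q = (p.1 + c *: y, p.2 + c * r)].
  have AB : A `<=` B.
    move=> p Ap; exists p, 0; split => //.
    by case: p {Ap} => ? ?; rewrite /= scale0r mul0r !addr0.
  have G0B : G0 `<=` B by move=> q /G0A /AB.
  have BU : B `|` G0 = B.
    apply/seteqP; split; last by move=> q' Bq; left.
    by move=> q' [//|/G0B].
  have linB : lin_dom B.
    split.
      move=> a _ _ [p [c [Ap ->]]] [q [d [Aq ->]]] /=.
      exists (a *: p.1 + q.1, a * p.2 + q.2), (a * c + d); split.
        exact: linA.1.
      congr pair => /=.
        by rewrite scalerDr scalerA scalerDl addrACA.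
      by rewrite mulrDr mulrDl mulrA addrACA.
    move=> _ [[u s] [c [Ap ->]]] /=.
    have [c0|c0|->] := ltgtP c 0; last first.
    - by rewrite mul0r scale0r !addr0; exact: (linA.2 _ Ap).
    - have Aw : A (c^-1 *: u, c^-1 * s).
        exact: (lin_dom_eq linA Ap A00 (addr0 _) (addr0 _)).
      have hr : r <= `|c^-1 *: u + y| - c^-1 * s.
        by apply: ge_sup => // _ [[v t] Avt <-]; exact: key _ _ _ _ Avt Aw.
      have e : u + c *: y = c *: (c^-1 *: u + y).
        by rewrite scalerDr scalerA mulfV ?gt_eqF // scale1r.
      rewrite e normrZ gtr0_norm //.
      have := ler_wpM2l (ltW c0) hr; rewrite mulrBr mulrA mulfV ?gt_eqF // mul1r.
      lra.
    - pose d := - c.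
      have d0 : 0 < d by rewrite /d oppr_gt0.
      have Aw : A (d^-1 *: u, d^-1 * s).
        exact: (lin_dom_eq linA Ap A00 (addr0 _) (addr0 _)).
      have hr : d^-1 * s - `|d^-1 *: u - y| <= r.
        by apply: (ub_le_sup Eub); exists (d^-1 *: u, d^-1 * s).
      have e : u + c *: y = d *: (d^-1 *: u - y).
        by rewrite scalerBr scalerA mulfV ?gt_eqF // scale1r /d scaleNr opprK.
      rewrite e normrZ gtr0_norm //.
      have := ler_wpM2l (ltW d0) hr; rewrite mulrBr mulrA mulfV ?gt_eqF // mul1r.
      rewrite /d; lra.
  apply: (Amax B); last by rewrite /P BU.
  split => // BA; apply: ny; exists r; apply: BA; exists (0,0), 1.
  by rewrite /= add0r scale1r mul1r add0r.
pose f y := projT1 (cid (Atot y)).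
have Af y : A (y, f y) := projT2 (cid (Atot y)).
have flin : forall (a : R) (y1 y2 : X), f (a *: y1 + y2) = a * f y1 + f y2.
  move=> a y1 y2; apply: (lin_dom_fun linA (Af _)).
  exact: (lin_dom_eq linA (Af y1) (Af y2) erefl erefl).
have f0 : f 0 = 0 := lin_dom_fun linA (Af 0) A00.
have fZ a y : f (a *: y) = a * f y by have := flin a y 0; rewrite !addr0 f0 addr0.
have fb : forall y, `|f y| <= `|y|.
  move=> y; have /= h1 := linA.2 _ (Af y).
  have : A (- y, - f y).
    by apply: (lin_dom_eq (a:=-1) linA (Af y) A00); rewrite ?scaleN1r ?mulN1r addr0.
  move=> /linA.2 /=; rewrite normrN => h2; rewrite ler_norml; apply/andP; split; lra.
have fx : f x = `|x| := lin_dom_fun linA (Af x) (G0A _ G0x).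
exists f; split; first by split => //; exists 1 => y; rewrite mul1r.
split => //.
have nx : 0 < `|x| by rewrite normr_gt0.
rewrite /dnorm; apply/le_anti/andP; split.
  apply: ge_sup; first by exists `|f 0|, 0 => //=; rewrite normr0.
  by move=> _ [z zle <-]; apply: le_trans (fb z) zle.
apply: ub_le_sup.
  by exists 1 => _ [z zle <-]; apply: le_trans (fb z) zle.
exists (`|x|^-1 *: x).
  by rewrite /= normrZ normfV normr_id mulVf ?gt_eqF.
by rewrite fZ fx mulVf ?gt_eqF // normr1.
Qed.

Lemma dual_f0 (f : X -> R) : is_dual f -> f 0 = 0.
Proof. by move=> [flin _]; have := flin 1 0 0; rewrite scale1r addr0 mul1r => h; lra. Qed.

Lemma dnorm_ub (f : X -> R) : is_dual f ->
  has_ubound [set `|f x| | x in [set x : X | `|x| <= 1]].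
Proof.
move=> [flin [C fC]]; exists `|C| => _ [z zle <-].
apply: le_trans (fC z) _; apply: le_trans (ler_wpM2r (normr_ge0 z) (ler_norm C)) _.
exact: ler_piMr.
Qed.

Lemma dnorm_ge0 (f : X -> R) : is_dual f -> 0 <= dnorm f.
Proof.
move=> fd; apply: (ub_le_sup (dnorm_ub fd)); exists 0 => //=.
  by rewrite normr0.
by rewrite dual_f0 // normr0.
Qed.

Lemma dnorm_le (f : X -> R) : is_dual f -> forall z, `|f z| <= dnorm f * `|z|.
Proof.
move=> fd z; have [flin _] := fd.
have fZ a y : f (a *: y) = a * f y.
  by have := flin a y 0; rewrite !addr0 dual_f0 // addr0.
have [->|z0] := eqVneq z 0; first by rewrite dual_f0 // !normr0 mulr0.
have hz : 0 < `|z| by rewrite normr_gt0.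
have := ub_le_sup (dnorm_ub fd) (ex_intro2 _ _ (`|z|^-1 *: z) _ erefl).
rewrite fZ normrM normfV normr_id mulrC ler_pdivrMr //; apply.
by rewrite /= normrZ normfV normr_id mulVf ?gt_eqF.
Qed.

End HBsec.

Theorem theorem2p5 (R : realType) (X : completeNormedModType R) (eps : R) :
  0 <= eps < 2 -> reflexive_space X ->
  (eps_smooth X eps <-> (S_dual X <= eps%:E)%E).
Proof.
move=> _ refl; split.
- move=> smooth; apply: ge_ereal_sup => _ [Phi [[Phil [C PhiC]] Phin] <-].
  have [x Hx] := refl Phi (conj Phil (ex_intro _ C PhiC)).
  apply: ge_ereal_sup => _ [f [[fd fn] Phif] [g [[gd gn] Phig] <-]].
  rewrite Hx // in Phif; rewrite Hx // in Phig.
  have x1 : 1 <= `|x|.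
    by have := dnorm_le fd x; rewrite fn mul1r Phif normr1.
  have x0 : x != 0 by rewrite -normr_eq0; apply/eqP => h; rewrite h in x1; lra.
  have [h [hd [hn hx]]] := hahn_banach_norming x0.
  have x2 : `|x| <= 1.
    suff : `|Phi h| <= bdnorm Phi by rewrite Hx // hx normr_id Phin.
    rewrite /bdnorm; apply: ub_le_sup; last first.
      by exists h => //; split => //; rewrite hn.
    exists `|C| => _ [k [kd kn] <-]; apply: le_trans (PhiC k kd) _.
    apply: le_trans (ler_wpM2r (dnorm_ge0 kd) (ler_norm C)) _.
    exact: ler_piMr.
  have xn : `|x| = 1 by apply/le_anti/andP.
  apply: le_trans (smooth x xn); apply: ereal_sup_ubound.
  exists f; first by split; [split|rewrite xn].
  by exists g; first by split; [split|rewrite xn].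
- move=> HS z hz; apply: le_trans HS.
  have z0 : z != 0 by rewrite -normr_eq0 hz oner_neq0.
  have [h [hd [hn hzv]]] := hahn_banach_norming z0.
  pose Phi := fun f : X -> R => f z.
  have Pb : bidual_sphere Phi.
    split.
      split; first by [].
      by exists `|z| => f fd; rewrite mulrC; exact: dnorm_le.
    rewrite /bdnorm; apply/le_anti/andP; split.
      apply: ge_sup; first by exists `|h z|, h => //; split => //; rewrite hn.
      move=> _ [k [kd kn] <-]; apply: le_trans (dnorm_le kd z) _.
      by rewrite hz mulr1.
    apply: ub_le_sup.
      exists 1 => _ [k [kd kn] <-]; apply: le_trans (dnorm_le kd z) _.
      by rewrite hz mulr1.
    by exists h; [split => //; rewrite hn | rewrite /Phi hzv hz normr1].
  have -> : Jset z = face Phi.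
    by apply/seteqP; split => f [fs fv]; split => //; rewrite /Phi ?fv ?hz // -hz.
  by apply: ereal_sup_ubound; exists Phi.
Qed.
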